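(* Let $\mathcal{F}_{z}(\theta)$, indexed by data points $z$, be a family of loss functions of parameters $\theta=(W;g)$, where $W=\{w^{(1)},\dots,w^{(m)}\}$ is a collection of vectors and $g$ collects the remaining parameters. Assume each $\mathcal{F}_z$ is continuously differentiable at every $\theta$ for which no $w^{(j)}$ is $0$, and that every $w^{(i)}$ is scale-invariant for every $\mathcal{F}_z$, i.e. $\mathcal{F}_z(\dots,c\,w^{(i)},\dots)=\mathcal{F}_z(\dots,w^{(i)},\dots)$ for all $c>0$. Consider stochastic gradient descent with learning rates $\eta_{\mathrm{w},t},\eta_{\mathrm{g},t}>0$ and data points $z_0,z_1,\dots$: $$w^{(i)}_{t+1}=w^{(i)}_t-\eta_{\mathrm{w},t}\nabla_{w^{(i)}_t}\mathcal{F}_{z_t}(\theta_t)\quad(i=1,\dots,m),\qquad g_{t+1}=g_t-\eta_{\mathrm{g},t}\nabla_{g_t}\mathcal{F}_{z_t}(\theta_t),$$ started from $\theta_0$ with all $w^{(i)}_0\neq 0$. Let $v^{(i)}_t=w^{(i)}_t/\|w^{(i)}_t\|_2$, $V_t=\{v^{(1)}_t,\dots,v^{(m)}_t\}$, $\tilde\theta_t=(V_t;g_t)$ and $G^{(i)}_t=\|w^{(i)}_t\|_2^2$. Then for all $t\ge0$ and all $i$, $$v^{(i)}_{t+1}=\Pi\!\left(v^{(i)}_t-\frac{\eta_{\mathrm{w},t}}{G^{(i)}_t}\nabla_{v^{(i)}_t}\mathcal{F}_{z_t}(\tilde\theta_t)\right),\qquad G^{(i)}_{t+1}=G^{(i)}_t+\frac{\eta_{\mathrm{w},t}^2}{G^{(i)}_t}\|\nabla_{v^{(i)}_t}\mathcal{F}_{z_t}(\tilde\theta_t)\|_2^2,$$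 where $\Pi(w)=w/\|w\|_2$ and $\nabla_{v^{(i)}_t}\mathcal{F}_{z_t}(\tilde\theta_t)$ denotes the gradient of $\mathcal{F}_{z_t}$ with respect to its $i$-th block $w^{(i)}$, evaluated at the point $(V_t;g_t)$.
   Context: Scale-invariance: a parameter block $w$ of a loss $\mathcal{F}(w,\theta')$ is scale-invariant if $\mathcal{F}(w,\theta')=\mathcal{F}(cw,\theta')$ for all $c>0$. *)

(* Defs.v *)
From mathcomp Require Import all_boot all_order all_algebra.
From mathcomp Require Import all_classical all_reals all_analysis.
Set Implicit Arguments. Unset Strict Implicit. Unset Printing Implicit Defensive.
Import Order.TTheory GRing.Theory Num.Theory.
Import numFieldNormedType.Exports.
Local Open Scope ring_scope.

(* Parameter vector theta = (W; g) is encoded as a row vector in R^n.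
   blk : 'I_n -> option 'I_m assigns each coordinate either to the block
   w^(i) (Some i) or to the remaining parameters g (None). *)

Definition sqnorm (R : realType) (n : nat) (x : 'rV[R]_n) : R :=
  \sum_(j < n) x ord0 j ^+ 2.

Definition projS (R : realType) (n : nat) (x : 'rV[R]_n) : 'rV[R]_n :=
  (Num.sqrt (sqnorm x))^-1 *: x.

Definition blk_vec (R : realType) (n m : nat) (blk : 'I_n -> option 'I_m)
  (i : 'I_m) (x : 'rV[R]_n) : 'rV[R]_n :=
  \row_j (if blk j == Some i then x ord0 j else 0).

Definition blk_sqnorm (R : realType) (n m : nat) (blk : 'I_n -> option 'I_m)
  (i : 'I_m) (x : 'rV[R]_n) : R := sqnorm (blk_vec blk i x).

Definition blk_scale (R : realType) (n m : nat) (blk : 'I_n -> option 'I_m)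
  (i : 'I_m) (c : R) (x : 'rV[R]_n) : 'rV[R]_n :=
  \row_j (if blk j == Some i then c * x ord0 j else x ord0 j).

Definition normalize (R : realType) (n m : nat) (blk : 'I_n -> option 'I_m)
  (x : 'rV[R]_n) : 'rV[R]_n :=
  \row_j (match blk j with
          | Some i => x ord0 j / Num.sqrt (blk_sqnorm blk i x)
          | None => x ord0 j
          end).

Definition grad (R : realType) (n : nat) (f : 'rV[R]_n -> R) (x : 'rV[R]_n)
  : 'rV[R]_n := \row_j ('D_(delta_mx ord0 j) f x).

Definition C1_at (R : realType) (n : nat) (f : 'rV[R]_n -> R) (x : 'rV[R]_n)
  : Prop :=
  (\forall y \near x, differentiable f y) /\
  (forall v : 'rV[R]_n, {for x, continuous (fun y => 'D_v f y)}).

(* Main.v *)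
Require Import Defs.
From mathcomp Require Import all_boot all_order all_algebra.
From mathcomp Require Import all_classical all_reals all_analysis.
From mathcomp Require Import ring lra.
Import Order.TTheory GRing.Theory Num.Theory.
Import numFieldNormedType.Exports.
Local Open Scope ring_scope.

Section Aux.
Variables (R : realType) (n m : nat) (blk : 'I_n -> option 'I_m).

Definition bscale (c : 'I_m -> R) (y : 'rV[R]_n) : 'rV[R]_n :=
  \row_j (match blk j with Some i => y ord0 j * c i | None => y ord0 j end).

Lemma F_bscale (F : 'rV[R]_n -> R)
  (Hs : forall i c x, 0 < c -> F (blk_scale blk i c x) = F x)
  (c : 'I_m -> R) (hc : forall i, 0 < c i) y : F (bscale c y) = F y.
Proof.
pose ck k := fun i : 'I_m => if (i < k)%N then c i else 1.
have H : forall k, (k <= m)%N -> F (bscale (ck k) y) = F y.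
  elim=> [|k IH] hk.
        congr F; apply/rowP => j; rewrite !mxE /ck.
    by case: (blk j) => // i; rewrite ltn0 mulr1.
  have hkm : (k < m)%N by [].
    apply: etrans (IH (ltnW hk)).
    transitivity (F (blk_scale blk (Ordinal hkm) (c (Ordinal hkm)) (bscale (ck k) y))); last exact: Hs.
    congr F; apply/rowP => j; rewrite !mxE /ck.
  case: (blk j) => // i /=.
  case: eqP => [[->]|ne]; first by rewrite /= ltnSn ltnn mulr1 mulrC.
  rewrite ltnS leq_eqVlt.
  have -> : (nat_of_ord i == k) = false.
    by apply/negbTE/eqP => e; apply: ne; congr Some; apply/val_inj.
  by [].
apply: etrans (H m (leqnn m)); congr F; apply/rowP => j; rewrite !mxE /ck.
by case: (blk j) => // i; rewrite ltn_ord.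
Qed.


Lemma D_orth (F : 'rV[R]_n -> R)
  (Hs : forall i c x, 0 < c -> F (blk_scale blk i c x) = F x)
  x i (dF : differentiable F x) :
  \sum_(j < n) blk_vec blk i x ord0 j * grad F x ord0 j = 0.
Proof.
have D0 : 'D_(blk_vec blk i x) F x = 0.
  rewrite /derive; apply: norm_lim_near_cst.
  near=> h.
  have h1 : `|h| < 1 by near: h; apply: dnbhs0_lt.
  have h2 : 0 < 1 + h.
    move: h1; rewrite ltr_norml => /andP[a _]; lra.
  rewrite /=.
  have -> : h *: blk_vec blk i x + x = blk_scale blk i (1+h) x.
    by apply/rowP => j; rewrite !mxE; case: ifP => _; rewrite ?mulr0; ring.
  by rewrite Hs // subrr scaler0.
move: D0; rewrite deriveE // {1}(row_sum_delta (blk_vec blk i x)) linear_sum => e; apply: etrans e.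
apply: eq_bigr => j _; rewrite linearZ /= -deriveE // /grad.
by rewrite !mxE.
Unshelve. all: by end_near.
Qed.


Lemma grad_bscale (F : 'rV[R]_n -> R)
  (Hs : forall i c x, 0 < c -> F (blk_scale blk i c x) = F x)
  (c : 'I_m -> R) (hc : forall i, 0 < c i) x (dF : differentiable F x) j i :
  blk j = Some i -> grad F (bscale c x) ord0 j = (c i)^-1 * grad F x ord0 j.
Proof.
move=> bj; rewrite /grad !mxE.
have cn0 : c i != 0 by rewrite gt_eqF.
have -> : 'D_(delta_mx ord0 j) F (bscale c x) = 'D_((c i)^-1 *: delta_mx ord0 j) F x.
  suff E : (fun h : R => h^-1 *: ((F \o shift (bscale c x)) (h *: delta_mx ord0 j) - F (bscale c x))) = (fun h : R => h^-1 *: ((F \o shift x) (h *: ((c i)^-1 *: delta_mx ord0 j)) - F x)) by rewrite /derive E.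
  apply/funext => h /=.
  rewrite (F_bscale F Hs c hc); congr (_ *: (_ - _)).
  rewrite -[in RHS](F_bscale F Hs c hc); congr F; apply/rowP => k; rewrite !mxE.
  case: (eqVneq k j) => [->|nkj].
    by rewrite bj eqxx /=; field.
  by case: (blk k) => * /=; rewrite ?eqxx /=; ring.
by rewrite deriveE // linearZ /= -deriveE.
Qed.


Lemma sqnormZ (a : R) (y : 'rV[R]_n) : sqnorm (a *: y) = a ^+ 2 * sqnorm y.
Proof.
rewrite /sqnorm mulr_sumr; apply: eq_bigr => j _; rewrite !mxE; ring.
Qed.

Lemma sqnorm_ge0 (y : 'rV[R]_n) : 0 <= sqnorm y.
Proof. by rewrite /sqnorm; apply: sumr_ge0 => j _; rewrite sqr_ge0. Qed.

Lemma sqnorm_gt0 (y : 'rV[R]_n) : y != 0 -> 0 < sqnorm y.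
Proof.
move=> ny; rewrite lt_def sqnorm_ge0 andbT; apply/eqP => e.
move/eqP: ny; apply; apply/rowP => j; rewrite mxE.
have := psumr_eq0P (fun k _ => sqr_ge0 (y ord0 k)) e (i:=j) isT.
by move/eqP; rewrite sqrf_eq0 => /eqP; rewrite (ord1 ord0).
Qed.

Lemma projSZ (a : R) (y : 'rV[R]_n) : 0 < a -> projS (a *: y) = projS y.
Proof.
move=> a0; rewrite /projS sqnormZ sqrtrM ?sqr_ge0 // sqrtr_sqr gtr0_norm //.
rewrite scalerA invfM mulrAC mulVf ?gt_eqF // mul1r //.
Qed.

End Aux.
Arguments F_bscale {R n m blk}.
Arguments D_orth {R n m blk}.
Arguments grad_bscale {R n m blk}.
Arguments sqnormZ {R n}.
Arguments sqnorm_ge0 {R n}.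
Arguments sqnorm_gt0 {R n}.
Arguments projSZ {R n}.

Theorem theorem2p5 (R : realType) (n m : nat) (blk : 'I_n -> option 'I_m)
  (Z : Type) (F : Z -> 'rV[R]_n -> R)
  (HC1 : forall (z : Z) (x : 'rV[R]_n),
      (forall i : 'I_m, blk_vec blk i x != 0) -> C1_at (F z) x)
  (Hscale : forall (z : Z) (i : 'I_m) (c : R) (x : 'rV[R]_n),
      0 < c -> F z (blk_scale blk i c x) = F z x)
  (eta_w eta_g : nat -> R)
  (Hw : forall t, 0 < eta_w t) (Hg : forall t, 0 < eta_g t)
  (zs : nat -> Z) (theta : nat -> 'rV[R]_n)
  (Hsgd : forall (t : nat) (j : 'I_n),
      theta t.+1 ord0 j =
        theta t ord0 j
        - (if blk j is Some _ then eta_w t else eta_g t)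
          * grad (F (zs t)) (theta t) ord0 j)
  (H0 : forall i : 'I_m, blk_vec blk i (theta 0%N) != 0) :
  forall (t : nat) (i : 'I_m),
    let G := blk_sqnorm blk i (theta t) in
    let gv := blk_vec blk i (grad (F (zs t)) (normalize blk (theta t))) in
    blk_vec blk i (normalize blk (theta t.+1)) =
      projS (blk_vec blk i (normalize blk (theta t)) - (eta_w t / G) *: gv)
    /\ blk_sqnorm blk i (theta t.+1) = G + eta_w t ^+ 2 / G * sqnorm gv.
Proof.
have step : forall t, (forall i, blk_vec blk i (theta t) != 0) -> forall i,
    blk_sqnorm blk i (theta t.+1) = blk_sqnorm blk i (theta t)
      + eta_w t ^+ 2 * sqnorm (blk_vec blk i (grad (F (zs t)) (theta t))).
  move=> t inv i.
  have dF : differentiable (F (zs t)) (theta t) by case: (HC1 (zs t) _ inv) => /nbhs_singleton.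
  have orth := D_orth _ (Hscale (zs t)) _ i dF.
  rewrite /blk_sqnorm /sqnorm.
  transitivity (\sum_(j < n) ((blk_vec blk i (theta t) ord0 j) ^+ 2
     + eta_w t ^+ 2 * (blk_vec blk i (grad (F (zs t)) (theta t)) ord0 j) ^+ 2
     - (2 * eta_w t) * (blk_vec blk i (theta t) ord0 j * grad (F (zs t)) (theta t) ord0 j))).
    apply: eq_bigr => j _; rewrite !mxE Hsgd /grad !mxE.
    by case: eqP => [e|ne]; rewrite ?e /=; ring.
  by rewrite sumrB big_split /= -mulr_sumr -mulr_sumr orth mulr0 subr0.
have inv : forall t i, blk_vec blk i (theta t) != 0.
  elim=> [|t IH] i; first exact: H0.
  have := sqnorm_gt0 _ (IH i); rewrite -/(blk_sqnorm blk i (theta t)) => p.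
  apply/eqP => e; move: (step t IH i); rewrite /blk_sqnorm e.
  have -> : sqnorm (0 : 'rV[R]_n) = 0 by rewrite /sqnorm big1 // => j _; rewrite mxE expr0n.
  have := sqnorm_ge0 (blk_vec blk i (grad (F (zs t)) (theta t))).
  have := Hw t; move: p; rewrite /blk_sqnorm; nra.
move=> t i G gv.
have dF : differentiable (F (zs t)) (theta t) by case: (HC1 (zs t) _ (inv t)) => /nbhs_singleton.
have NG : 0 < G := sqnorm_gt0 _ (inv t i).
set r := Num.sqrt G.
have r0 : 0 < r by rewrite sqrtr_gt0.
have rr : r ^+ 2 = G by rewrite sqr_sqrtr // ltW.
set g := blk_vec blk i (grad (F (zs t)) (theta t)).
set w := blk_vec blk i (theta t).
have hc : forall k, 0 < (Num.sqrt (blk_sqnorm blk k (theta t)))^-1.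
  by move=> k; rewrite invr_gt0 sqrtr_gt0 sqnorm_gt0.
have Egv : gv = r *: g.
  apply/rowP => j; rewrite !mxE; case: eqP => [e|_]; last by rewrite mulr0.
  rewrite (_ : normalize blk (theta t) = @bscale R n m blk (fun k => (Num.sqrt (blk_sqnorm blk k (theta t)))^-1) (theta t)) //.
  by have := grad_bscale _ (Hscale (zs t)) _ hc _ dF j i e; rewrite /grad !mxE => ->; rewrite invrK.
have Ew : blk_vec blk i (normalize blk (theta t)) = r^-1 *: w.
  apply/rowP => j; rewrite !mxE; case: eqP => [e|_]; last by rewrite mulr0.
  by rewrite e mulrC.
have Ew' : blk_vec blk i (normalize blk (theta t.+1)) =
    (Num.sqrt (blk_sqnorm blk i (theta t.+1)))^-1 *: blk_vec blk i (theta t.+1).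
  apply/rowP => j; rewrite !mxE; case: eqP => [e|_]; last by rewrite mulr0.
  by rewrite e mulrC.
have Ex' : blk_vec blk i (theta t.+1) = w - eta_w t *: g.
  apply/rowP => j; rewrite !mxE Hsgd /grad !mxE.
  by case: eqP => [e|_]; rewrite ?e /=; ring.
have step' := step t (inv t) i.
split.
  rewrite Ew' Ew Egv.
  have -> : r^-1 *: w - (eta_w t / G) *: (r *: g) = r^-1 *: (w - eta_w t *: g).
    rewrite scalerBr !scalerA; congr (_ - _ *: _); rewrite -rr; field.
    by rewrite gt_eqF.
  rewrite projSZ ?invr_gt0 //.
  by rewrite /projS /blk_sqnorm Ex'.
rewrite step' Egv sqnormZ rr -/G -/g; field.
by rewrite gt_eqF.
Qed.
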